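(* Let $b\in\mathbb{R}$. If $b\ge\frac16$, then for all $x\in(0,1)$ \[ \frac{\pi}{2}\cdot\frac{(1-x)^{1/2}}{(1+x)^b}<\arccos x<2^{b+1/2}\cdot\frac{(1-x)^{1/2}}{(1+x)^b}. \tag{$*$} \] Moreover, the right-hand inequality in $( * )$ holds for all $x\in(0,1)$ if and only if $b\ge\frac16$. If $b\le\frac2\pi-\frac12$, then both inequalities in $( * )$ are reversed for all $x\in(0,1)$, i.e. $2^{b+1/2}\frac{(1-x)^{1/2}}{(1+x)^b}<\arccos x<\frac{\pi}{2}\frac{(1-x)^{1/2}}{(1+x)^b}$; and the reversed left-hand inequality $\arccos x<\frac{\pi}{2}\frac{(1-x)^{1/2}}{(1+x)^b}$ holds for all $x\in(0,1)$ if and only if $b\le\frac2\pi-\frac12$.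
   Context: $\arccos$ denotes the principal inverse cosine with values in $[0,\pi]$. *)

(* Defs.v *)
From Stdlib Require Import Reals.
Open Scope R_scope.

(* g b x = (1-x)^{1/2} / (1+x)^b, using Rpower for real exponents (bases > 0 on (0,1)). *)
Definition gfun (b x : R) : R := Rpower (1 - x) (1/2) / Rpower (1 + x) b.

(* Main.v *)
Require Import Defs.
From Stdlib Require Import Reals Lra Psatz Arith Factorial.
Open Scope R_scope.
Lemma INRfS n : INR (fact (S n)) = INR (S n) * INR (fact n).
Proof. rewrite fact_simpl, mult_INR. reflexivity. Qed.
Ltac fixfact H := cbn [sum_f_R0] in H;
change (2*0+1)%nat with 1%nat in H; change (2*1+1)%nat with 3%nat in H;
change (2*2+1)%nat with 5%nat in H; change (2*3+1)%nat with 7%nat in H;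
change (2*4+1)%nat with 9%nat in H;
change (2*0)%nat with 0%nat in H; change (2*1)%nat with 2%nat in H;
change (2*2)%nat with 4%nat in H; change (2*3)%nat with 6%nat in H;
change (2*4)%nat with 8%nat in H;
repeat rewrite INRfS in H; simpl (fact 0) in H.
Lemma sinbd t : 0 <= t <= PI -> t - t^3/6 + t^5/120 - t^7/5040 <= sin t <= t - t^3/6 + t^5/120 - t^7/5040 + t^9/362880.
Proof. intros. destruct (SIN t) as [H1 H2]; try lra.
unfold sin_ub, sin_lb, sin_approx, sin_term in *. fixfact H1. fixfact H2.
match type of H1 with ?r <= _ => replace r with (t - t^3/6 + t^5/120 - t^7/5040) in H1 by (simpl; field) end. 
match type of H2 with _ <= ?r => replace r with (t - t^3/6 + t^5/120 - t^7/5040 + t^9/362880) in H2 by (simpl; field) end. lra. Qed.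
Lemma cosbd t : - PI/2 <= t <= PI/2 -> 1 - t^2/2 + t^4/24 - t^6/720 <= cos t <= 1 - t^2/2 + t^4/24 - t^6/720 + t^8/40320.
Proof. intros. destruct (COS t) as [H1 H2]; try lra.
unfold cos_ub, cos_lb, cos_approx, cos_term in *. fixfact H1. fixfact H2.
match type of H1 with ?r <= _ => replace r with (1 - t^2/2 + t^4/24 - t^6/720) in H1 by (simpl; field) end. 
match type of H2 with _ <= ?r => replace r with (1 - t^2/2 + t^4/24 - t^6/720 + t^8/40320) in H2 by (simpl; field) end. lra. Qed.
Lemma PI_ub : PI <= 4. Proof. exact PI_4. Qed.
Lemma G1 t : 0 < t < PI/2 -> 0 < 2*t + t * cos t - 3 * sin t.
Proof. intros. pose proof PI_4. pose proof PI_RGT_0.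
destruct (sinbd t) as [_ S2]; try lra. destruct (cosbd t) as [C1 _]; try lra.
assert (t * (1 - t^2/2 + t^4/24 - t^6/720) <= t * cos t) by (apply Rmult_le_compat_l; lra).
assert (0 < t^5 * (1/60 - t^2/720 + 3*t^2/5040 - 3*t^4/362880)).
{ apply Rmult_lt_0_compat. apply pow_lt; lra. assert (t^2 < 4) by nra. assert (t^4 < 16) by nra. nra. }
nra. Qed.
Lemma dl_val f x l l' : derivable_pt_lim f x l -> l = l' -> derivable_pt_lim f x l'.
Proof. intros; subst; auto. Qed.

Definition rr (s : R) := sin s / (s * cos s).

Lemma rr_incr s1 s2 : 0 < s1 -> s1 < s2 -> s2 < PI/2 -> rr s1 < rr s2.
Proof. intros. pose proof PI_RGT_0.
destruct (MVT_cor2 rr (fun s => (s - sin s * cos s) / (s * cos s)^2) s1 s2) as [c [Hc1 Hc2]]; auto.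
- intros c Hc. assert (0 < cos c) by (apply cos_gt_0; lra).
  apply (dl_val _ _ _ _ (derivable_pt_lim_div _ _ c _ _ (derivable_pt_lim_sin c) (derivable_pt_lim_mult _ _ c _ _ (derivable_pt_lim_id c) (derivable_pt_lim_cos c)) ltac:(unfold mult_fct, id; nra))).
  unfold mult_fct, id, Rsqr. pose proof (sin2_cos2 c) as SC. unfold Rsqr in SC. assert (E: c - sin c*cos c = c*(sin c*sin c + cos c*cos c) - sin c * cos c) by (rewrite SC; ring). rewrite E. field. split; lra.
- assert (0 < cos c) by (apply cos_gt_0; lra).
  assert (sin c * cos c < c). { pose proof (sin_lt_x (2*c)). rewrite sin_2a in H4. lra. }
  assert (0 < (c - sin c * cos c) / (c * cos c)^2). { apply Rdiv_lt_0_compat. lra. apply pow_lt. nra. }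
  nra. Qed.
Definition cc := 4/PI - 1.
Definition XX u := u*cos u*cos u - sin u*cos u + cc*(u*sin u*sin u).
Definition XX' u := (4/PI)*sin u*sin u - (4 - 8/PI)*u*sin u*cos u.

Lemma XX_deriv u : derivable_pt_lim XX u (XX' u).
Proof. pose proof PI_RGT_0.
apply (dl_val _ _ _ _ (derivable_pt_lim_plus _ _ u _ _ (derivable_pt_lim_minus _ _ u _ _ (derivable_pt_lim_mult _ _ u _ _ (derivable_pt_lim_mult _ _ u _ _ (derivable_pt_lim_id u) (derivable_pt_lim_cos u)) (derivable_pt_lim_cos u)) (derivable_pt_lim_mult _ _ u _ _ (derivable_pt_lim_sin u) (derivable_pt_lim_cos u))) (derivable_pt_lim_scal _ cc u _ (derivable_pt_lim_mult _ _ u _ _ (derivable_pt_lim_mult _ _ u _ _ (derivable_pt_lim_id u) (derivable_pt_lim_sin u)) (derivable_pt_lim_sin u))))).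
unfold XX', cc, mult_fct, id. pose proof (sin2_cos2 u) as SC. unfold Rsqr in SC.
assert (E: 4/PI*sin u*sin u = (4/PI)*sin u * sin u + 0 * (sin u * sin u + cos u * cos u - 1)) by ring. rewrite E, SC.
field. lra. Qed.

Lemma XX'_sign u : 0 < u < PI/2 -> XX' u = (4/PI) * (u * sin u * cos u) * (rr u - (PI - 2)).
Proof. intros. pose proof PI_RGT_0. assert (0 < cos u) by (apply cos_gt_0; lra).
unfold XX', rr. field. lra. Qed.

Lemma XX_0 : XX 0 = 0. Proof. unfold XX. rewrite sin_0. ring. Qed.
Lemma XX_PI4 : XX (PI/4) = 0.
Proof. unfold XX, cc. rewrite sin_PI4, cos_PI4. pose proof PI_RGT_0.
assert (0 < sqrt 2) by (apply sqrt_lt_R0; lra). pose proof (sqrt_sqrt 2 ltac:(lra)).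
field_simplify; try lra. Qed.

Lemma XX_neg u : 0 < u < PI/4 -> XX u < 0.
Proof. intros Hu. pose proof PI_RGT_0. pose proof PI_4.
assert (PI - 2 > 0) by (pose proof PI2_1; lra).
destruct (Rle_lt_dec (rr u) (PI - 2)) as [Hr|Hr].
- destruct (MVT_cor2 XX XX' 0 u) as [c [Hc1 Hc2]]; try lra. intros; apply XX_deriv.
  rewrite XX_0 in Hc1. rewrite XX'_sign in Hc1 by lra.
  assert (rr c < rr u) by (apply rr_incr; lra).
  assert (0 < cos c) by (apply cos_gt_0; lra). assert (0 < sin c) by (apply sin_gt_0; lra).
  assert (0 < c * sin c * cos c) by (apply Rmult_lt_0_compat; nra).
  assert (0 < 4/PI) by (apply Rdiv_lt_0_compat; lra).
  assert (0 < 4/PI * (c * sin c * cos c)) by nra.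
  assert (4/PI * (c * sin c * cos c) * (rr c - (PI - 2)) < 0) by (assert (0 < 4 / PI * (c * sin c * cos c) * (PI - 2 - rr c)) by (apply Rmult_lt_0_compat; lra); lra).
  nra.
- destruct (MVT_cor2 XX XX' u (PI/4)) as [c [Hc1 Hc2]]; try lra. intros; apply XX_deriv.
  rewrite XX_PI4 in Hc1. rewrite XX'_sign in Hc1 by lra.
  assert (rr u < rr c) by (apply rr_incr; lra).
  assert (0 < cos c) by (apply cos_gt_0; lra). assert (0 < sin c) by (apply sin_gt_0; lra).
  assert (0 < c * sin c * cos c) by (apply Rmult_lt_0_compat; nra).
  assert (0 < 4/PI) by (apply Rdiv_lt_0_compat; lra).
  assert (0 < 4/PI * (c * sin c * cos c)) by nra.
  assert (0 < 4/PI * (c * sin c * cos c) * (rr c - (PI - 2))) by (apply Rmult_lt_0_compat; lra).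
  nra.
Qed.
Definition HH b u := ln (sin u) - ln u - 2*b*ln (cos u).
Definition HH' b u := cos u / sin u - / u + 2*b*(sin u / cos u).

Lemma HH_deriv b u : 0 < u < PI/2 -> derivable_pt_lim (HH b) u (HH' b u).
Proof. intros Hu. pose proof PI_RGT_0.
assert (0 < cos u) by (apply cos_gt_0; lra). assert (0 < sin u) by (apply sin_gt_0; lra).
apply (dl_val _ _ _ _ (derivable_pt_lim_minus _ _ u _ _ (derivable_pt_lim_minus _ _ u _ _
  (derivable_pt_lim_comp _ _ u _ _ (derivable_pt_lim_sin u) (derivable_pt_lim_ln (sin u) H1))
  (derivable_pt_lim_ln u ltac:(lra)))
  (derivable_pt_lim_scal _ (2*b) u _ (derivable_pt_lim_comp _ _ u _ _ (derivable_pt_lim_cos u) (derivable_pt_lim_ln (cos u) H0))))).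
unfold HH'. field. lra. Qed.

Lemma HH'_16 u : 0 < u < PI/4 -> 0 < HH' (1/6) u.
Proof. intros Hu. pose proof PI_RGT_0.
assert (0 < cos u) by (apply cos_gt_0; lra). assert (0 < sin u) by (apply sin_gt_0; lra).
pose proof (G1 (2*u) ltac:(lra)) as G. rewrite sin_2a, cos_2a in G.
pose proof (sin2_cos2 u) as SC. unfold Rsqr in SC.
assert (E: HH' (1/6) u * (u * sin u * cos u) = u*cos u*cos u - sin u*cos u + (1/3)*(u*sin u*sin u)).
{ unfold HH'. field. lra. }
assert (E2: u*(sin u * sin u + cos u*cos u) = u) by (rewrite SC; ring).
assert (0 < u * sin u * cos u) by (apply Rmult_lt_0_compat; nra).
nra. Qed.

Lemma HH'_b0 u : 0 < u < PI/4 -> HH' (2/PI - 1/2) u < 0.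
Proof. intros Hu. pose proof PI_RGT_0.
assert (0 < cos u) by (apply cos_gt_0; lra). assert (0 < sin u) by (apply sin_gt_0; lra).
pose proof (XX_neg u Hu) as X.
assert (E: HH' (2/PI - 1/2) u * (u * sin u * cos u) = XX u).
{ unfold HH', XX, cc. field. lra. }
assert (0 < u * sin u * cos u) by (apply Rmult_lt_0_compat; nra).
nra. Qed.

Lemma sign1 b u : b >= 1/6 -> 0 < u < PI/4 -> 0 < HH' b u.
Proof. intros Hb Hu. pose proof PI_RGT_0. pose proof (HH'_16 u Hu).
assert (0 < cos u) by (apply cos_gt_0; lra). assert (0 < sin u) by (apply sin_gt_0; lra).
assert (0 < sin u / cos u) by (apply Rdiv_lt_0_compat; lra).
unfold HH' in *. nra. Qed.

Lemma sign2 b u : b <= 2/PI - 1/2 -> 0 < u < PI/4 -> HH' b u < 0.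
Proof. intros Hb Hu. pose proof PI_RGT_0. pose proof (HH'_b0 u Hu).
assert (0 < cos u) by (apply cos_gt_0; lra). assert (0 < sin u) by (apply sin_gt_0; lra).
assert (0 < sin u / cos u) by (apply Rdiv_lt_0_compat; lra).
unfold HH' in *. nra. Qed.

Lemma ln_le1 y : 0 < y -> ln y <= y - 1.
Proof. intros. pose proof (exp_ineq1_le (ln y)). rewrite exp_ln in H0; lra. Qed.
Lemma ln_ge1 y : 0 < y -> 1 - / y <= ln y.
Proof. intros. pose proof (ln_le1 (/ y) ltac:(apply Rinv_0_lt_compat; lra)).
rewrite ln_Rinv in H0; lra. Qed.

Lemma HH_small_bd b v : 0 < v <= 1/2 -> Rabs (HH b v) <= (1/3 + 2 * Rabs b) * v^2.
Proof. intros Hv. pose proof PI_RGT_0. pose proof PI2_1.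
assert (0 < cos v) by (apply cos_gt_0; lra). assert (0 < sin v) by (apply sin_gt_0; lra).
destruct (sinbd v) as [S1 _]; try lra. destruct (cosbd v) as [C1 C2]; try lra.
assert (v^5/120 - v^7/5040 >= 0) by (assert (v^2 <= 1) by nra; assert (0 < v^5) by (apply pow_lt; lra); nra).
assert (v^4/24 - v^6/720 >= 0) by (assert (v^2 <= 1) by nra; assert (0 < v^4) by (apply pow_lt; lra); nra).
assert (v^4/24 - v^6/720 + v^8/40320 >= 0) by (assert (0 <= v^8) by (apply pow_le; lra); lra).
assert (Ssv : sin v <= v) by (left; apply sin_lt_x; lra).
assert (Sl : v - v^3/6 <= sin v) by lra.
assert (Cl : 1 - v^2/2 <= cos v) by lra.
assert (Cu : cos v <= 1) by (pose proof (COS_bound v); lra).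
assert (L1 : ln (sin v) - ln v = ln (sin v / v)).
{ unfold Rdiv. rewrite ln_mult, ln_Rinv; try lra. apply Rinv_0_lt_compat; lra. }
assert (q : 0 < sin v / v) by (apply Rdiv_lt_0_compat; lra).
assert (q1 : sin v / v <= 1) by (apply Rmult_le_reg_r with v; [lra|]; unfold Rdiv; rewrite Rmult_assoc, Rinv_l; lra).
assert (q2 : 1 - v^2/6 <= sin v / v) by (apply Rmult_le_reg_r with v; [lra|]; unfold Rdiv; rewrite Rmult_assoc, Rinv_l; lra).
pose proof (ln_le1 _ q). pose proof (ln_ge1 _ q).
assert (/ (sin v / v) <= 1 + v^2/3).
{ apply Rmult_le_reg_r with (sin v / v); [lra|]. rewrite Rinv_l by lra. assert (v^2 <= 1/4) by nra. nra. }
pose proof (ln_le1 _ H1). pose proof (ln_ge1 _ H1).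
assert (/ cos v <= 1 + v^2).
{ apply Rmult_le_reg_r with (cos v); [lra|]. rewrite Rinv_l by lra. assert (v^2 <= 1/4) by nra. nra. }
unfold HH. rewrite L1.
assert (Ls : - v^2/3 <= ln (sin v / v) <= 0) by lra.
assert (Lc : - v^2 <= ln (cos v) <= 0) by lra.
assert (0 <= v^2) by nra.
assert (Rabs (2*b*ln (cos v)) <= 2 * Rabs b * v^2).
{ rewrite !Rabs_mult. rewrite (Rabs_right 2) by lra. rewrite (Rabs_left1 (ln (cos v))) by lra.
  pose proof (Rabs_pos b). nra. }
eapply Rle_trans. apply Rabs_triang. rewrite Rabs_Ropp.
assert (Rabs (ln (sin v / v)) <= v^2/3) by (rewrite Rabs_left1; lra). lra. Qed.

Lemma HH_small b e w : 0 < e -> 0 < w -> exists v, 0 < v < w /\ Rabs (HH b v) < e.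
Proof. intros He Hw. set (K := 1/3 + 2 * Rabs b).
assert (HK : 0 < K) by (unfold K; pose proof (Rabs_pos b); lra).
assert (Hq : 0 < e / K) by (apply Rdiv_lt_0_compat; lra).
set (s := sqrt (e / K)). assert (Hs : 0 < s) by (apply sqrt_lt_R0; lra).
assert (Hss : s * s = e / K) by (apply sqrt_sqrt; lra).
set (v := Rmin (w/2) (Rmin (1/2) (s/2))).
assert (v1 : v <= w/2) by apply Rmin_l.
assert (v2 : v <= 1/2) by (eapply Rle_trans; [apply Rmin_r| apply Rmin_l]).
assert (v3 : v <= s/2) by (eapply Rle_trans; [apply Rmin_r| apply Rmin_r]).
assert (v0 : 0 < v) by (unfold v; repeat apply Rmin_glb_lt; lra).
exists v. split; [lra|].
eapply Rle_lt_trans. apply HH_small_bd; lra. fold K.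
assert (v^2 <= s*s/4) by nra.
assert (K * (s*s) = e) by (rewrite Hss; field; lra). nra. Qed.

Lemma HH_incr b u : (forall c, 0 < c < PI/4 -> 0 < HH' b c) -> 0 < u < PI/4 ->
  0 < HH b u /\ HH b u < HH b (PI/4).
Proof. intros Hd Hu. pose proof PI_RGT_0.
assert (mono : forall a a', 0 < a -> a < a' -> a' <= PI/4 -> HH b a < HH b a').
{ intros a a' Ha Haa Ha'. destruct (MVT_cor2 (HH b) (HH' b) a a') as [c [Hc1 Hc2]]; try lra.
  intros; apply HH_deriv; lra. assert (0 < HH' b c) by (apply Hd; lra). nra. }
split; [|apply mono; lra].
destruct (Rle_or_lt (HH b u) 0) as [Hn|]; [|lra].
assert (A := mono (u/2) u ltac:(lra) ltac:(lra) ltac:(lra)).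
destruct (HH_small b (- HH b (u/2)) (u/2)) as [v [Hv1 Hv2]]; try lra.
assert (B := mono v (u/2) ltac:(lra) ltac:(lra) ltac:(lra)).
pose proof (Rle_abs (- HH b v)). rewrite Rabs_Ropp in H0. lra. Qed.

Lemma HH_decr b u : (forall c, 0 < c < PI/4 -> HH' b c < 0) -> 0 < u < PI/4 ->
  HH b u < 0 /\ HH b (PI/4) < HH b u.
Proof. intros Hd Hu. pose proof PI_RGT_0.
assert (mono : forall a a', 0 < a -> a < a' -> a' <= PI/4 -> HH b a' < HH b a).
{ intros a a' Ha Haa Ha'. destruct (MVT_cor2 (HH b) (HH' b) a a') as [c [Hc1 Hc2]]; try lra.
  intros; apply HH_deriv; lra. assert (HH' b c < 0) by (apply Hd; lra). nra. }
split; [|apply mono; lra].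
destruct (Rle_or_lt 0 (HH b u)) as [Hn|]; [|lra].
assert (A := mono (u/2) u ltac:(lra) ltac:(lra) ltac:(lra)).
destruct (HH_small b (HH b (u/2)) (u/2)) as [v [Hv1 Hv2]]; try lra.
assert (B := mono v (u/2) ltac:(lra) ltac:(lra) ltac:(lra)).
pose proof (Rle_abs (HH b v)). lra. Qed.
Lemma Rpower_pos a y : 0 < Rpower a y. Proof. unfold Rpower; apply exp_pos. Qed.

Lemma ln_div a c : 0 < a -> 0 < c -> ln (a / c) = ln a - ln c.
Proof. intros. unfold Rdiv. rewrite ln_mult, ln_Rinv; try lra. apply Rinv_0_lt_compat; lra. Qed.

Lemma acos_half x : 0 < x < 1 -> 0 < acos x / 2 < PI/4.
Proof. intros. pose proof (acos_bound_lt x ltac:(lra)). pose proof (cos_acos x ltac:(lra)).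
destruct (Rlt_or_le (acos x) (PI/2)). lra.
pose proof (cos_le_0 (acos x) H2 ltac:(lra)). lra. Qed.

Lemma ln_sqrt2 : ln (1 / sqrt 2) = - (1/2) * ln 2.
Proof. assert (0 < sqrt 2) by (apply sqrt_lt_R0; lra). pose proof (sqrt_sqrt 2 ltac:(lra)).
assert (ln 2 = 2 * ln (sqrt 2)) by (rewrite <- H0 at 1; rewrite ln_mult; lra).
rewrite ln_div; try lra. rewrite ln_1. lra. Qed.

Lemma HH_PI4 b : HH b (PI/4) = (1/2) * ln 2 - ln (PI/2) + b * ln 2.
Proof. unfold HH. rewrite sin_PI4, cos_PI4, ln_sqrt2. pose proof PI_RGT_0.
replace (PI/4) with ((PI/2)/2) by field. rewrite ln_div; try lra. Qed.

Lemma trans b x : 0 < x < 1 ->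
  ln (Rpower 2 (b + 1/2) * gfun b x) - ln (acos x) = HH b (acos x / 2) /\
  ln (acos x) - ln (PI/2 * gfun b x) = HH b (PI/4) - HH b (acos x / 2).
Proof. intros Hx. pose proof (acos_half x Hx) as Hu. set (u := acos x / 2) in *.
pose proof PI_RGT_0.
assert (Ea : acos x = 2 * u) by (unfold u; field).
assert (Ex : x = cos (2*u)) by (rewrite <- Ea, cos_acos; lra).
assert (0 < cos u) by (apply cos_gt_0; lra). assert (0 < sin u) by (apply sin_gt_0; lra).
pose proof (sin2_cos2 u) as SC. unfold Rsqr in SC. rewrite cos_2a in Ex.
assert (E1 : 1 - x = 2 * (sin u)^2) by nra. assert (E2 : 1 + x = 2 * (cos u)^2) by nra.
assert (lg : ln (gfun b x) = (1/2) * (ln 2 + 2 * ln (sin u)) - b * (ln 2 + 2 * ln (cos u))).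
{ unfold gfun. rewrite ln_div by apply Rpower_pos. rewrite !ln_Rpower, E1, E2.
  rewrite !ln_mult, !ln_pow; try lra; try (apply pow_lt; lra). simpl INR. ring. }
assert (la : ln (acos x) = ln 2 + ln u) by (rewrite Ea, ln_mult; lra).
rewrite HH_PI4. unfold HH.
rewrite !ln_mult; try lra; try apply Rpower_pos; try (unfold gfun; apply Rdiv_lt_0_compat; apply Rpower_pos).
rewrite ln_Rpower, lg, la. split; field. Qed.

Lemma ln_lt_iff p q : 0 < p -> 0 < q -> (p < q <-> ln p < ln q).
Proof. intros; split; intros. apply ln_increasing; auto. apply ln_lt_inv; auto. Qed.
Lemma E_exist b : b < 1/6 -> exists u, 0 < u < PI/4 /\ HH b u < 0.
Proof. intros Hb. pose proof PI_RGT_0. pose proof PI2_1.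
assert (gen : 0 <= b -> forall u, 0 < u <= 1/2 -> HH b u <= (sin u / u - 1) + 2 * b * (/ cos u - 1)).
{ intros Hb' u Hu. assert (0 < cos u) by (apply cos_gt_0; lra). assert (0 < sin u) by (apply sin_gt_0; lra).
  unfold HH. replace (ln (sin u) - ln u) with (ln (sin u / u)) by (rewrite ln_div; lra).
  pose proof (ln_le1 (sin u / u) ltac:(apply Rdiv_lt_0_compat; lra)).
  pose proof (ln_ge1 (cos u) H1). destruct (Rle_or_lt 0 b).
  - nra.
  - assert (ln (cos u) <= 0). { pose proof (ln_le1 _ H2). pose proof (COS_bound u). lra. }
    assert (1 - / cos u <= 0). { assert (cos u <= 1) by (pose proof (COS_bound u); lra).
      assert (1 <= / cos u). { apply Rmult_le_reg_r with (cos u); [lra|]. rewrite Rinv_l; lra. } lra. }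
    nra. }
destruct (Rle_or_lt b 0) as [Hb0|Hb0].
- exists (1/2). split. lra. assert (0 < cos (1/2)) by (apply cos_gt_0; lra). assert (0 < sin (1/2)) by (apply sin_gt_0; lra).
  assert (sin (1/2) < 1/2) by (apply sin_lt_x; lra).
  unfold HH. replace (ln (sin (1/2)) - ln (1/2)) with (ln (sin (1/2) / (1/2))) by (rewrite ln_div; lra).
  assert (ln (sin (1/2) / (1/2)) < 0). { rewrite <- ln_1. apply ln_increasing. apply Rdiv_lt_0_compat; lra.
    apply Rmult_lt_reg_r with (1/2); [lra|]. unfold Rdiv at 1. rewrite Rmult_assoc, Rinv_l; lra. }
  assert (ln (cos (1/2)) <= 0). { pose proof (ln_le1 _ H1). pose proof (COS_bound (1/2)). lra. }
  nra.
- set (e := 1/6 - b). set (u := sqrt (e/2)).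
  assert (Hu0 : 0 < u) by (apply sqrt_lt_R0; unfold e; lra).
  assert (Huu : u * u = e/2) by (apply sqrt_sqrt; unfold e; lra).
  assert (u <= 1/2) by (assert (u*u <= 1/4) by (unfold e in Huu; lra); nra).
  exists u. split. lra. eapply Rle_lt_trans. apply gen. lra. lra.
  assert (0 < cos u) by (apply cos_gt_0; lra).
  destruct (sinbd u) as [_ S2]; try lra. destruct (cosbd u) as [C1 _]; try lra.
  set (s := u*u) in *.
  assert (u^3 = s*u) by (unfold s; ring). assert (u^5 = s*s*u) by (unfold s; ring).
  assert (u^7 = s*s*s*u) by (unfold s; ring). assert (u^9 = s*s*s*s*u) by (unfold s; ring).
  assert (u^2 = s) by (unfold s; ring). assert (u^4 = s*s) by (unfold s; ring).
  assert (u^6 = s*s*s) by (unfold s; ring). 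
  assert (0 < s) by (unfold s; nra). assert (s < 1/12) by (unfold e in Huu; lra).
  assert (q1 : sin u / u <= 1 - s/6 + s*s/120).
  { apply Rmult_le_reg_r with u; [lra|]. unfold Rdiv. rewrite Rmult_assoc, Rinv_l by lra.
    assert (0 <= s*s*s*u*(1/5040 - s/362880)) by (apply Rmult_le_pos; nra). nra. }
  assert (q2 : / cos u <= 1 + s/2 + s*s).
  { apply Rmult_le_reg_r with (cos u); [lra|]. rewrite Rinv_l by lra.
    assert (1 - s/2 <= cos u) by (assert (0 <= s*s*(1/24 - s/720)) by (apply Rmult_le_pos; nra); nra).
    assert (0 <= 1 + s/2 + s*s) by nra. nra. }
  assert (2 * b * (/ cos u - 1) <= 2 * b * (s/2 + s*s)) by nra.
  assert (Hbe : b = 1/6 - 2 * s) by (unfold e in Huu; unfold s; lra).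
  match goal with H : 2 * b * (/ cos u - 1) <= _ |- _ => rewrite Hbe in H end. rewrite Hbe.
  assert (0 < s*s) by nra. assert (0 < s*s*s) by nra.
  assert (2 * (1/6 - 2*s) * (s/2 + s*s) = s/6 + s*s/3 - 2*s*s - 4*(s*s*s)) by field.
  lra. Qed.

Lemma F_exist b : b > 2/PI - 1/2 -> exists u, 0 < u < PI/4 /\ HH b u < HH b (PI/4).
Proof. intros Hb. pose proof PI_RGT_0.
assert (D := HH_deriv b (PI/4) ltac:(lra)).
assert (l : HH' b (PI/4) = 1 - 4/PI + 2*b).
{ unfold HH'. rewrite sin_PI4, cos_PI4. assert (0 < sqrt 2) by (apply sqrt_lt_R0; lra). field. split; lra. }
set (L := HH' b (PI/4)) in *.
assert (HL : 0 < L) by (rewrite l; assert (4/PI - 1 < 2*b) by lra; lra).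
destruct (D L HL) as [del Hdel].
set (h := - Rmin (del/2) (PI/8)).
assert (h1 : h < 0) by (unfold h; apply Ropp_lt_gt_0_contravar; apply Rmin_glb_lt; pose proof (cond_pos del); lra).
assert (h2 : - h <= del/2) by (unfold h; rewrite Ropp_involutive; apply Rmin_l).
assert (h3 : - h <= PI/8) by (unfold h; rewrite Ropp_involutive; apply Rmin_r).
pose proof (cond_pos del).
specialize (Hdel h ltac:(lra) ltac:(rewrite Rabs_left; lra)).
exists (PI/4 + h). split. lra.
apply Rabs_def2 in Hdel. destruct Hdel as [_ Hd].
assert (0 < (HH b (PI/4 + h) - HH b (PI/4)) / h) by lra.
assert (HH b (PI/4 + h) - HH b (PI/4) < 0).
{ replace (HH b (PI/4 + h) - HH b (PI/4)) with (((HH b (PI/4 + h) - HH b (PI/4)) / h) * h) by (field; lra). nra. }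
lra. Qed.

Lemma pos_facts b x : 0 < x < 1 -> 0 < acos x /\ 0 < Rpower 2 (b + 1/2) * gfun b x /\ 0 < PI/2 * gfun b x.
Proof. intros. pose proof PI_RGT_0. pose proof (acos_half x H).
assert (0 < gfun b x) by (unfold gfun; apply Rdiv_lt_0_compat; apply Rpower_pos).
pose proof (Rpower_pos 2 (b+1/2)). split. lra. split; apply Rmult_lt_0_compat; lra. Qed.

Lemma x_of_u u : 0 < u < PI/4 -> 0 < cos (2*u) < 1 /\ acos (cos (2*u)) / 2 = u.
Proof. intros. pose proof PI_RGT_0. split. split. apply cos_gt_0; lra.
rewrite cos_2a. pose proof (sin2_cos2 u). unfold Rsqr in H1. assert (0 < sin u) by (apply sin_gt_0; lra). nra.
rewrite acos_cos; lra. Qed.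

Theorem theorem2 :
  (forall b : R, b >= 1/6 -> forall x : R, 0 < x < 1 ->
     PI / 2 * gfun b x < acos x /\ acos x < Rpower 2 (b + 1/2) * gfun b x) /\
  (forall b : R,
     (forall x : R, 0 < x < 1 -> acos x < Rpower 2 (b + 1/2) * gfun b x) <-> b >= 1/6) /\
  (forall b : R, b <= 2 / PI - 1/2 -> forall x : R, 0 < x < 1 ->
     Rpower 2 (b + 1/2) * gfun b x < acos x /\ acos x < PI / 2 * gfun b x) /\
  (forall b : R,
     (forall x : R, 0 < x < 1 -> acos x < PI / 2 * gfun b x) <-> b <= 2 / PI - 1/2).
Proof.
assert (P1 : forall b : R, b >= 1/6 -> forall x : R, 0 < x < 1 ->
     PI / 2 * gfun b x < acos x /\ acos x < Rpower 2 (b + 1/2) * gfun b x).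
{ intros b Hb x Hx. destruct (pos_facts b x Hx) as [A [B C]]. destruct (trans b x Hx) as [T1 T2].
  destruct (HH_incr b (acos x / 2) (fun c Hc => sign1 b c Hb Hc) (acos_half x Hx)).
  split; [apply ln_lt_iff|apply ln_lt_iff]; auto; lra. }
assert (P3 : forall b : R, b <= 2 / PI - 1/2 -> forall x : R, 0 < x < 1 ->
     Rpower 2 (b + 1/2) * gfun b x < acos x /\ acos x < PI / 2 * gfun b x).
{ intros b Hb x Hx. destruct (pos_facts b x Hx) as [A [B C]]. destruct (trans b x Hx) as [T1 T2].
  destruct (HH_decr b (acos x / 2) (fun c Hc => sign2 b c Hb Hc) (acos_half x Hx)).
  split; [apply ln_lt_iff|apply ln_lt_iff]; auto; lra. }
split; [exact P1|]. split; [|split; [exact P3|]].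
- intros b; split; [|intros Hb x Hx; apply (P1 b Hb x Hx)].
  intros Hall. destruct (Rlt_or_le b (1/6)) as [Hb|Hb]; [|lra].
  destruct (E_exist b Hb) as [u [Hu Hh]]. destruct (x_of_u u Hu) as [Hx Hu'].
  specialize (Hall _ Hx). destruct (pos_facts b _ Hx) as [A [B C]].
  destruct (trans b _ Hx) as [T1 T2]. rewrite Hu' in T1.
  apply ln_lt_iff in Hall; auto. lra.
- intros b; split; [|intros Hb x Hx; apply (P3 b Hb x Hx)].
  intros Hall. destruct (Rle_or_lt b (2/PI - 1/2)) as [Hb|Hb]; [lra|].
  destruct (F_exist b Hb) as [u [Hu Hh]]. destruct (x_of_u u Hu) as [Hx Hu'].
  specialize (Hall _ Hx). destruct (pos_facts b _ Hx) as [A [B C]].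
  destruct (trans b _ Hx) as [T1 T2]. rewrite Hu' in T2.
  apply ln_lt_iff in Hall; auto. lra.
Qed.
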